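(* Assume the prime-tuple hypothesis. Then there exist infinite sets $A, B \subset \mathbb{Z}$ such that $A+B=\{a+b : a\in A,\ b\in B\}$ is exactly the set of all integers $\pm p$ with $p$ a (positive) prime and $p>3$; moreover, every such signed prime $r$ has exactly one representation as $r=a+b$ with $a\in A$, $b\in B$.
   Context: Prime-tuple hypothesis: for any finitely many pairs of integers $a_i, b_i$ with $a_i\neq 0$, there are infinitely many integers $x$ such that all the numbers $a_ix+b_i$ are prime, unless there is a prime $p$ such that for every integer $x$ we have $p \mid a_ix+b_i$ for some $i$. *)

(* Defs.v *)
From Stdlib Require Import ZArith List Znumtheory.
Open Scope Z_scope.

Definition finite_Zset (S : Z -> Prop) : Prop :=
  exists l : list Z, forall x, S x -> In x l.
Definition infinite_Zset (S : Z -> Prop) : Prop := ~ finite_Zset S.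

Definition Zprime_signed (n : Z) : Prop := prime (Z.abs n).

Definition prime_tuple_hypothesis : Prop :=
  forall l : list (Z * Z),
    (forall ab, In ab l -> fst ab <> 0) ->
    (exists p, prime p /\
       forall x : Z, exists ab, In ab l /\ (p | fst ab * x + snd ab))
    \/ infinite_Zset (fun x => forall ab, In ab l -> Zprime_signed (fst ab * x + snd ab)).

Definition signed_prime_gt3 (r : Z) : Prop :=
  exists p, prime p /\ 3 < p /\ (r = p \/ r = - p).

(* Main.v *)
Require Import Defs.
From Stdlib Require Import ZArith List Znumtheory Lia Classical Bool ClassicalEpsilon.
Import ListNotations.
Open Scope Z_scope.


Lemma prime_gt1 p : prime p -> 1 < p.
Proof. intros [H _]; exact H. Qed.

Lemma div_sub_cong q m x c d : (q | x - c) -> (q | m * c + d) -> (q | m * x + d).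
Proof.
  intros [k Hk] [j Hj]. exists (m * k + j).
  replace (m * x + d) with (m * (x - c) + (m * c + d)) by ring. rewrite Hk, Hj; ring.
Qed.

Lemma ndiv_cong q m x c d : (q | x - c) -> ~ (q | m * c + d) -> ~ (q | m * x + d).
Proof.
  intros H1 H2 H3. apply H2. apply (div_sub_cong q m c x d); auto.
  destruct H1 as [k Hk]. exists (-k). lia.
Qed.

Lemma pigeon (p : Z) (L : list (Z*Z)) : prime p ->
  (forall md, In md L -> ~ (p | fst md)) -> Z.of_nat (length L) < p ->
  exists t, forall md, In md L -> ~ (p | fst md * t + snd md).
Proof.
  intros Hp HL Hlen.
  destruct (classic (exists t, forall md, In md L -> ~ (p | fst md * t + snd md))) as [H|H]; [exact H|].
  exfalso.
  assert (Hall : forall t, exists md, In md L /\ (p | fst md * t + snd md)).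
  { intro t. apply NNPP. intro H1. apply H. exists t. intros md Hmd Hd. apply H1. eauto. }
  pose (kb := fun t (md : Z*Z) => Z.eqb ((fst md * t + snd md) mod p) 0).
  pose (killer := fun t => match find (kb t) L with Some md => md | None => (0,0) end).
  pose (Y := map Z.of_nat (seq 0 (S (length L)))).
  assert (HpP : 0 < p) by (pose proof (prime_gt1 _ Hp); lia).
  assert (Hk : forall t, In (killer t) L /\ (p | fst (killer t) * t + snd (killer t))).
  { intro t. unfold killer. destruct (find (kb t) L) eqn:E.
    - apply find_some in E. destruct E as [E1 E2]. split; auto.
      unfold kb in E2. apply Z.eqb_eq in E2. apply Z.mod_divide; auto; lia.
    - destruct (Hall t) as [md [H1 H2]]. exfalso.
      pose proof (find_none _ _ E md H1) as E'. unfold kb in E'.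
      apply Z.eqb_neq in E'. apply E'. apply Z.mod_divide; auto; lia. }
  assert (HY : forall y, In y Y -> 0 <= y <= Z.of_nat (length L)).
  { intros y Hy. unfold Y in Hy. apply in_map_iff in Hy. destruct Hy as [k [<- Hk2]].
    apply in_seq in Hk2. lia. }
  assert (HND : NoDup (map killer Y)).
  { apply NoDup_map_NoDup_ForallPairs.
    - intros y1 y2 Hy1 Hy2 Heq.
      pose proof (HY _ Hy1). pose proof (HY _ Hy2).
      destruct (Hk y1) as [Hin1 Hd1]. destruct (Hk y2) as [_ Hd2].
      rewrite Heq in Hd1.
      assert (Hd : (p | fst (killer y2) * (y1 - y2))).
      { replace (fst (killer y2) * (y1 - y2)) with
          ((fst (killer y2) * y1 + snd (killer y2)) - (fst (killer y2) * y2 + snd (killer y2))) by ring.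
        apply Z.divide_sub_r; auto. }
      apply prime_mult in Hd; auto. destruct Hd as [Hd|Hd].
      + exfalso. rewrite <- Heq in Hd. eapply HL; [apply Hk | exact Hd].
      + destruct (Z.eq_dec y1 y2) as [|Hne]; auto. exfalso.
        destruct (Z.lt_ge_cases y1 y2).
        * assert (Hd' : (p | y2 - y1)) by (destruct Hd as [k Hk']; exists (-k); lia).
          apply Z.divide_pos_le in Hd'; lia.
        * apply Z.divide_pos_le in Hd; lia.
    - unfold Y. apply NoDup_map_NoDup_ForallPairs.
      + intros a b _ _ H'. lia.
      + apply seq_NoDup. }
  assert (Hincl : incl (map killer Y) L).
  { intros md Hmd. apply in_map_iff in Hmd. destruct Hmd as [y [<- _]]. apply Hk. }
  pose proof (NoDup_incl_length HND Hincl) as Hl.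
  rewrite length_map in Hl. unfold Y in Hl. rewrite length_map, length_seq in Hl. lia.
Qed.

Fixpoint Zfact (k : nat) : Z :=
  match k with O => 1 | S k' => Z.of_nat (S k') * Zfact k' end.

Lemma Zfact_pos k : 1 <= Zfact k.
Proof. induction k; cbn [Zfact]; [lia|]. assert (1 <= Z.of_nat (S k)) by lia. nia. Qed.

Lemma Zfact_div k i : 1 <= i <= Z.of_nat k -> (i | Zfact k).
Proof.
  induction k; intros Hi; cbn [Zfact] in *; [lia|].
  destruct (Z.eq_dec i (Z.of_nat (S k))) as [->|Hne].
  - apply Z.divide_mul_l. apply Z.divide_refl.
  - apply Z.divide_mul_r. apply IHk. lia.
Qed.

Lemma Zfact_ndiv k p : prime p -> Z.of_nat k < p -> ~ (p | Zfact k).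
Proof.
  intro Hp. induction k; intros Hk Hd; cbn [Zfact] in *.
  - apply Z.divide_1_r in Hd. pose proof (prime_gt1 _ Hp). lia.
  - apply prime_mult in Hd; auto. destruct Hd as [Hd|Hd].
    + apply Z.divide_pos_le in Hd; lia.
    + apply IHk; auto; lia.
Qed.

Lemma crt (Kc : nat) (Q : Z -> Z -> Prop) :
  (forall q, prime q -> q <= Z.of_nat Kc -> exists c, forall x, (q | x - c) -> Q q x) ->
  exists c0, forall q, prime q -> q <= Z.of_nat Kc -> forall x, (q | x - c0) -> Q q x.
Proof.
  induction Kc; intros H.
  - exists 0. intros q Hq Hle. pose proof (prime_gt1 _ Hq). lia.
  - destruct IHKc as [c0 Hc0].
    { intros q Hq Hle. apply H; auto; lia. }
    destruct (classic (prime (Z.of_nat (S Kc)))) as [HP|HP].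
    + destruct (H _ HP (Z.le_refl _)) as [c Hc].
      set (M := Zfact Kc).
      assert (HM : ~ (Z.of_nat (S Kc) | M)) by (apply Zfact_ndiv; auto; lia).
      assert (Hrp := prime_rel_prime _ HP _ HM).
      apply rel_prime_sym in Hrp. apply rel_prime_bezout in Hrp.
      destruct Hrp as [u v Huv].
      exists (c0 + M * (u * (c - c0))).
      intros q Hq Hle x Hx.
      destruct (Z.eq_dec q (Z.of_nat (S Kc))) as [->|Hne].
      * apply Hc. destruct Hx as [k Hk]. exists (k - v * (c - c0)).
        replace (x - c) with ((x - (c0 + M * (u * (c - c0)))) + (M * u - 1) * (c - c0)) by ring.
        rewrite Hk. replace (M * u - 1) with (- (v * Z.of_nat (S Kc))) by lia. ring.
      * apply Hc0; [auto| lia |].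
        assert (HqM : (q | M)) by (apply Zfact_div; pose proof (prime_gt1 _ Hq); lia).
        destruct Hx as [k Hk]. destruct HqM as [j Hj].
        exists (k + j * (u * (c - c0))).
        replace (x - c0) with ((x - (c0 + M * (u * (c - c0)))) + M * (u * (c - c0))) by ring.
        rewrite Hk, Hj. ring.
    + exists c0. intros q Hq Hle. apply Hc0; auto.
      destruct (Z.eq_dec q (Z.of_nat (S Kc))) as [->|Hne]; [contradiction|lia].
Qed.


Lemma infinite_large (S : Z -> Prop) Bd : infinite_Zset S -> exists t, S t /\ Bd < Z.abs t.
Proof.
  intros Hinf. apply NNPP. intro H. apply Hinf.
  exists (map (fun k => Z.of_nat k - Z.abs Bd) (seq 0 (Z.to_nat (2 * Z.abs Bd + 1)))).
  intros x Hx. apply in_map_iff. exists (Z.to_nat (x + Z.abs Bd)).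
  assert (Z.abs x <= Bd) by (apply Z.nlt_ge; intro; apply H; eauto).
  split; [lia|]. apply in_seq. lia.
Qed.

Lemma choose_x (PTH : prime_tuple_hypothesis) (Kc : nat) (L : list (Z*Z)) (Good : Z -> Z -> Prop) (Bd : Z) :
  (forall sd, In sd L -> fst sd = 1 \/ fst sd = -1) ->
  Z.of_nat (length L) <= Z.of_nat Kc ->
  (forall q, prime q -> q <= Z.of_nat Kc -> exists c, forall x, (q | x - c) ->
      (forall sd, In sd L -> ~ (q | fst sd * x + snd sd)) /\ Good q x) ->
  exists x, Bd < Z.abs x /\ (forall sd, In sd L -> prime (Z.abs (fst sd * x + snd sd))) /\
      (forall q, prime q -> q <= Z.of_nat Kc -> Good q x).
Proof.
  intros Hs Hlen Hloc.
  destruct (crt Kc (fun q x => (forall sd, In sd L -> ~ (q | fst sd * x + snd sd)) /\ Good q x) Hloc)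
    as [c0 Hc0].
  set (M := Zfact Kc).
  assert (HM1 : 1 <= M) by apply Zfact_pos.
  set (l := map (fun sd : Z*Z => (fst sd * M, fst sd * c0 + snd sd)) L).
  destruct (PTH l) as [[p [Hp Hcov]] | Hinf].
  - intros ab Hab. unfold l in Hab. apply in_map_iff in Hab. destruct Hab as [sd [<- Hsd]].
    simpl. destruct (Hs _ Hsd) as [-> | ->]; lia.
  - exfalso. destruct (Z.le_gt_cases p (Z.of_nat Kc)) as [Hle|Hgt].
    + destruct (Hcov 0) as [ab [Hab Hd]]. unfold l in Hab. apply in_map_iff in Hab.
      destruct Hab as [sd [<- Hsd]]. simpl in Hd.
      destruct (Hc0 p Hp Hle c0) as [H1 _]; [rewrite Z.sub_diag; apply Z.divide_0_r|].
      apply (H1 sd Hsd). replace (fst sd * c0 + snd sd) with (fst sd * M * 0 + (fst sd * c0 + snd sd)) by ring.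
      exact Hd.
    + destruct (pigeon p l Hp) as [t Ht].
      * intros md Hmd. unfold l in Hmd. apply in_map_iff in Hmd. destruct Hmd as [sd [<- Hsd]].
        simpl. intro Hd. apply (Zfact_ndiv Kc p Hp); [lia|]. fold M.
        destruct (Hs _ Hsd) as [E|E]; rewrite E in Hd.
        -- rewrite Z.mul_1_l in Hd; exact Hd.
        -- apply Z.divide_opp_r. replace (- M) with (-1 * M) by ring. exact Hd.
      * unfold l. rewrite length_map. lia.
      * destruct (Hcov t) as [ab [Hab Hd]]. exact (Ht ab Hab Hd).
  - destruct (infinite_large _ (Bd + Z.abs c0) Hinf) as [t [Ht Hbig]].
    exists (M * t + c0). split; [|split].
    + assert (Z.abs t <= Z.abs (M * t)) by (rewrite Z.abs_mul; nia). lia.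
    + intros sd Hsd. assert (Hin : In (fst sd * M, fst sd * c0 + snd sd) l).
      { unfold l. apply in_map_iff. exists sd; auto. }
      specialize (Ht _ Hin). unfold Zprime_signed in Ht. simpl in Ht.
      replace (fst sd * (M * t + c0) + snd sd) with (fst sd * M * t + (fst sd * c0 + snd sd)) by ring.
      exact Ht.
    + intros q Hq Hle. apply (Hc0 q Hq Hle). replace (M * t + c0 - c0) with (M * t) by ring.
      apply Z.divide_mul_l. apply Zfact_div. pose proof (prime_gt1 _ Hq). lia.
Qed.


Definition rep (A B : list Z) (s : Z) : Prop := exists a b, In a A /\ In b B /\ a + b = s.

Definition Main (q : Z) (A B F : list Z) : Prop :=
  forall rho, ~ (q | rho) -> exists a, In a A /\
    (forall b, In b B -> ~ (q | a + b)) /\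
    (forall a', In a' A -> ~ (q | a' + rho - a)) /\
    (forall f, In f F -> ~ (q | f + rho - a)).

Definition Loc (q : Z) (A B : list Z) : Prop :=
  exists F : list Z, NoDup F /\
    (forall f f', In f F -> In f' F -> (q | f - f') -> f = f') /\
    (forall f a, In f F -> In a A -> ~ (q | a - f)) /\
    (forall f b, In f F -> In b B -> ~ (q | f + b)) /\
    (3 < q -> ~ rep A B q -> ~ rep A B (-q) -> (2 <= length F)%nat) /\
    (3 < q -> ~ rep A B q \/ ~ rep A B (-q) -> (1 <= length F)%nat) /\
    Main q A B F.

Definition nb (tr : option Z) (x : Z) : list Z :=
  match tr with Some r => [r - x] | None => [] end.

Definition formsA (A B : list Z) (tr : option Z) : list (Z*Z) :=
  map (fun b => (1, b)) B ++
  match tr with Some r => map (fun a => (-1, a + r)) A | None => [] end.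

Lemma nd q u v : (q | u - v) -> ~ (q | v) -> ~ (q | u).
Proof.
  intros H1 H2 H3. apply H2. replace v with (u - (u - v)) by ring. apply Z.divide_sub_r; auto.
Qed.

Lemma dvd_lin q x c k : (q | x - c) -> (q | k * (x - c)).
Proof. intros; apply Z.divide_mul_r; auto. Qed.

Lemma rep_mono A B A' B' s : rep A B s -> rep (A ++ A') (B ++ B') s.
Proof.
  intros [a [b [Ha [Hb E]]]]. exists a, b. repeat split; auto; apply in_or_app; auto.
Qed.

Lemma in_app1 {T} (x : T) l y : In x (l ++ [y]) -> In x l \/ x = y.
Proof. intro H. apply in_app_or in H. destruct H as [H|[H|[]]]; auto. Qed.

Lemma in_nb tr x b : In b (nb tr x) -> exists r, tr = Some r /\ b = r - x.
Proof. destruct tr as [r|]; simpl; intro H; [destruct H as [<-|[]]; eauto | destruct H]. Qed.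

Lemma in_formsA A B tr sd : In sd (formsA A B tr) ->
  (exists b, In b B /\ sd = (1, b)) \/
  (exists r a, tr = Some r /\ In a A /\ sd = (-1, a + r)).
Proof.
  unfold formsA. intro H. apply in_app_or in H. destruct H as [H|H].
  - left. apply in_map_iff in H. destruct H as [b [<- Hb]]. eauto.
  - right. destruct tr as [r|]; [|destruct H].
    apply in_map_iff in H. destruct H as [a [<- Ha]]. eauto.
Qed.

Lemma signed_div q r : prime q -> signed_prime_gt3 r -> (q | r) -> 3 < q /\ (r = q \/ r = -q).
Proof.
  intros Hq [p [Hp [H3 Hr]]] Hd.
  assert (Hqp : (q | p)) by (destruct Hr as [->| ->]; auto; apply Z.divide_opp_r; auto).
  pose proof (prime_div_prime _ _ Hq Hp Hqp) as ->. split; [lia|auto].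
Qed.

Lemma ctrlA q A B tr : prime q -> Loc q A B ->
  (forall r, tr = Some r -> signed_prime_gt3 r /\ ~ rep A B r) ->
  exists c, forall x, (q | x - c) ->
    (forall sd, In sd (formsA A B tr) -> ~ (q | fst sd * x + snd sd)) /\
    Loc q (A ++ [x]) (B ++ nb tr x).
Proof.
  intros Hq [F [HND [HFd [HFA [HFB [HL2 [HL1 HM]]]]]]] Htr.
  assert (Hq1 : ~ (q | 1)) by (intro H; apply Z.divide_1_r in H; pose proof (prime_gt1 _ Hq); lia).
  destruct (classic (exists r, tr = Some r /\ (q | r))) as [[r [Er Hqr]] | Hnd].
  - destruct (Htr r Er) as [Hsp Hnrep].
    destruct (signed_div q r Hq Hsp Hqr) as [Hq3 Hr].
    destruct F as [|f F'].
    + exfalso. assert (H := HL1 Hq3). simpl in H.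
      destruct Hr as [->| ->]; [specialize (H (or_introl Hnrep))|specialize (H (or_intror Hnrep))]; lia.
    + exists f. intros x Hx. subst tr. split.
      * intros sd Hsd. apply in_formsA in Hsd.
        destruct Hsd as [[b [Hb ->]] | [r' [a [Er' [Ha ->]]]]]; cbn [fst snd].
        -- apply (nd _ _ (f + b)); [|apply HFB; simpl; auto].
           replace (1 * x + b - (f + b)) with (1 * (x - f)) by ring. apply dvd_lin; auto.
        -- injection Er' as <-. apply (nd _ _ (a - f)); [|apply HFA; simpl; auto].
           destruct Hqr as [k Hk].
           replace (-1 * x + (a + r) - (a - f)) with (-1 * (x - f) + k * q) by lia.
           apply Z.divide_add_r; [apply dvd_lin; auto|apply Z.divide_mul_r, Z.divide_refl].
      * assert (Hrr : rep (A ++ [x]) (B ++ [r - x]) r).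
        { exists x, (r - x). repeat split; try (apply in_or_app; simpl; auto); ring. }
        exists F'. inversion HND as [|? ? Hnin HND']; subst.
        assert (Hfne : forall f', In f' F' -> ~ (q | f' - f)).
        { intros f' Hf' Hd. apply Hnin. rewrite (HFd f' f) in Hf'; simpl; auto. }
        assert (Hxf : forall f', In f' F' -> ~ (q | f' - x)).
        { intros f' Hf'. apply (nd _ _ (f' - f)); [|auto].
          replace (f' - x - (f' - f)) with (-1 * (x - f)) by ring. apply dvd_lin; auto. }
        simpl. repeat split; auto.
        -- intros f1 f2 H1 H2. apply HFd; simpl; auto.
        -- intros f1 a Hf1 Ha. apply in_app1 in Ha. destruct Ha as [Ha| ->].
           ++ apply HFA; simpl; auto.
           ++ intro Hd. apply (Hxf f1 Hf1). replace (f1 - x) with (-1 * (x - f1)) by ring. apply Z.divide_mul_r; auto.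
        -- intros f1 b Hf1 Hb. apply in_app1 in Hb. destruct Hb as [Hb| ->].
           ++ apply HFB; simpl; auto.
           ++ apply (nd _ _ (f1 - f)); [|auto].
              destruct Hqr as [k Hk].
              replace (f1 + (r - x) - (f1 - f)) with (k * q + -1 * (x - f)) by lia.
              apply Z.divide_add_r; [apply Z.divide_mul_r, Z.divide_refl|apply dvd_lin; auto].
        -- intros _ H1 H2. exfalso.
           destruct Hr as [-> | ->]; [apply H1|apply H2]; exact Hrr.
        -- intros _ H. destruct F' as [|f2 F'']; simpl; [|lia]. exfalso.
           assert (HH := HL2 Hq3). simpl in HH.
           assert (Hboth : ~ rep A B q /\ ~ rep A B (-q)).
           { destruct Hr as [-> | ->]; split; auto;
             intro Hrep; destruct H as [H|H]; apply H; try (apply rep_mono; exact Hrep); exact Hrr. }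
           destruct Hboth as [Hb1 Hb2]. specialize (HH Hb1 Hb2). lia.
        -- intros rho Hrho. destruct (HM rho Hrho) as [a [Ha [Hi [Hii Hiii]]]].
           exists a. repeat split.
           ++ apply in_or_app; auto.
           ++ intros b Hb. apply in_app1 in Hb. destruct Hb as [Hb| ->]; auto.
              apply (nd _ _ (a - f)); [|apply HFA; simpl; auto].
              destruct Hqr as [k Hk].
              replace (a + (r - x) - (a - f)) with (k * q + -1 * (x - f)) by lia.
              apply Z.divide_add_r; [apply Z.divide_mul_r, Z.divide_refl|apply dvd_lin; auto].
           ++ intros a' Ha'. apply in_app1 in Ha'. destruct Ha' as [Ha'| ->]; auto.
              apply (nd _ _ (f + rho - a)); [|apply Hiii; simpl; auto].
              replace (x + rho - a - (f + rho - a)) with (1 * (x - f)) by ring. apply dvd_lin; auto.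
           ++ intros f' Hf'. apply Hiii; simpl; auto.
  -
    set (rho := match tr with Some r => r | None => 1 end).
    assert (Hrho : ~ (q | rho)).
    { unfold rho. destruct tr as [r|]; auto. intro H. apply Hnd. eauto. }
    destruct (HM rho Hrho) as [a [Ha [Hi [Hii Hiii]]]].
    exists a. intros x Hx. split.
    + intros sd Hsd. apply in_formsA in Hsd.
      destruct Hsd as [[b [Hb ->]] | [r' [a' [Er' [Ha' ->]]]]]; cbn [fst snd].
      * apply (nd _ _ (a + b)); auto.
        replace (1 * x + b - (a + b)) with (1 * (x - a)) by ring. apply dvd_lin; auto.
      * apply (nd _ _ (a' + rho - a)); auto.
        unfold rho; rewrite Er'.
        replace (-1 * x + (a' + r') - (a' + r' - a)) with (-1 * (x - a)) by ring. apply dvd_lin; auto.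
    + exists F. repeat split; auto.
      * intros f a' Hf Ha'. apply in_app1 in Ha'. destruct Ha' as [Ha'| ->]; auto.
        apply (nd _ _ (a - f)); auto.
        replace (x - f - (a - f)) with (1 * (x - a)) by ring. apply dvd_lin; auto.
      * intros f b Hf Hb. apply in_app_or in Hb. destruct Hb as [Hb| Hb]; auto.
        apply in_nb in Hb. destruct Hb as [r [Er ->]].
        apply (nd _ _ (f + rho - a)); auto.
        unfold rho; rewrite Er.
        replace (f + (r - x) - (f + r - a)) with (-1 * (x - a)) by ring. apply dvd_lin; auto.
      * intros H3 H1 H2. apply HL2; auto; intro H; [apply H1|apply H2]; apply rep_mono; auto.
      * intros H3 H. apply HL1; auto. destruct H as [H|H]; [left|right]; intro H'; apply H; apply rep_mono; auto.
      * intros rho' Hrho'. destruct (HM rho' Hrho') as [a2 [Ha2 [Hi2 [Hii2 Hiii2]]]].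
        exists a2. repeat split.
        -- apply in_or_app; auto.
        -- intros b Hb. apply in_app_or in Hb. destruct Hb as [Hb| Hb]; auto.
           apply in_nb in Hb. destruct Hb as [r [Er ->]].
           apply (nd _ _ (a2 + rho - a)); auto.
           unfold rho; rewrite Er.
           replace (a2 + (r - x) - (a2 + r - a)) with (-1 * (x - a)) by ring. apply dvd_lin; auto.
        -- intros a' Ha'. apply in_app1 in Ha'. destruct Ha' as [Ha'| ->]; auto.
           apply (nd _ _ (a + rho' - a2)); auto.
           replace (x + rho' - a2 - (a + rho' - a2)) with (1 * (x - a)) by ring. apply dvd_lin; auto.
        -- auto.
Qed.


Lemma ctrlB q A B : prime q -> Loc q A B ->
  exists c, forall y, (q | y - c) ->
    (forall sd, In sd (map (fun a => (1, a)) A) -> ~ (q | fst sd * y + snd sd)) /\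
    Loc q A (B ++ [y]).
Proof.
  intros Hq [F [HND [HFd [HFA [HFB [HL2 [HL1 HM]]]]]]].
  assert (Hq1 : ~ (q | 1)) by (intro H; apply Z.divide_1_r in H; pose proof (prime_gt1 _ Hq); lia).
  destruct (HM 1 Hq1) as [a [Ha [Hi [Hii Hiii]]]].
  exists (1 - a). intros y Hy. split.
  - intros sd Hsd. apply in_map_iff in Hsd. destruct Hsd as [a' [<- Ha']]. cbn [fst snd].
    apply (nd _ _ (a' + 1 - a)); auto.
    replace (1 * y + a' - (a' + 1 - a)) with (1 * (y - (1 - a))) by ring. apply dvd_lin; auto.
  - exists F. repeat split; auto.
    + intros f b Hf Hb. apply in_app1 in Hb. destruct Hb as [Hb| ->]; auto.
      apply (nd _ _ (f + 1 - a)); auto.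
      replace (f + y - (f + 1 - a)) with (1 * (y - (1 - a))) by ring. apply dvd_lin; auto.
    + intros H3 H1 H2. apply HL2; auto; intro H; [apply H1|apply H2];
        replace A with (A ++ []) by apply app_nil_r; apply rep_mono; auto.
    + intros H3 H. apply HL1; auto. destruct H as [H|H]; [left|right]; intro H'; apply H;
        replace A with (A ++ []) by apply app_nil_r; apply rep_mono; auto.
    + intros rho Hrho. destruct (HM rho Hrho) as [a2 [Ha2 [Hi2 [Hii2 Hiii2]]]].
      exists a2. repeat split; auto.
      intros b Hb. apply in_app1 in Hb. destruct Hb as [Hb| ->]; auto.
      apply (nd _ _ (a2 + 1 - a)); auto.
      replace (a2 + y - (a2 + 1 - a)) with (1 * (y - (1 - a))) by ring. apply dvd_lin; auto.
Qed.

Lemma ndiv_neg q u : ~ (q | u) -> ~ (q | - u).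
Proof. intros H H'. apply H. apply Z.divide_opp_r in H'. rewrite Z.opp_involutive in H'. auto. Qed.

Lemma enterA q A B tr x0 :
  prime q ->
  In x0 A -> (forall b, In b B -> ~ (q | x0 + b)) ->
  (forall r, tr = Some r -> ~ (q | r)) ->
  Z.of_nat (length B) + Z.of_nat (length A) + 4 + (Z.of_nat (length A) + 2)
    + (Z.of_nat (length A) + 2) * (Z.of_nat (length A) + 2) < q ->
  exists c, forall x, (q | x - c) ->
    (forall sd, In sd (formsA A B tr) -> ~ (q | fst sd * x + snd sd)) /\
    Loc q (A ++ [x]) (B ++ nb tr x).
Proof.
  intros Hq Hx0 Hx0B Htr Hbound.
  assert (Hq2 : 2 < q) by lia.
  assert (Hnd2 : ~ (q | 2)) by (intro H; apply Z.divide_pos_le in H; lia).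
  assert (Hnd1 : ~ (q | 1)) by (intro H; apply Z.divide_pos_le in H; lia).
  assert (Hndm1 : ~ (q | -1)) by (intro H; apply Hnd1; apply Z.divide_opp_r; exact H).
  set (L1 := map (fun a => (1, -a)) A ++ map (fun b => (1, b)) B).
  assert (HL1len : Z.of_nat (length L1) = Z.of_nat (length A) + Z.of_nat (length B)).
  { unfold L1. rewrite length_app, !length_map. lia. }
  destruct (pigeon q L1 Hq) as [f1 Hf1].
  { intros md Hmd. unfold L1 in Hmd. apply in_app_or in Hmd.
    destruct Hmd as [Hmd|Hmd]; apply in_map_iff in Hmd; destruct Hmd as [? [<- _]]; exact Hnd1. }
  { lia. }
  destruct (pigeon q ((1, -f1) :: L1) Hq) as [f2 Hf2].
  { intros md [<-|Hmd]; [exact Hnd1|]. unfold L1 in Hmd. apply in_app_or in Hmd.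
    destruct Hmd as [Hmd|Hmd]; apply in_map_iff in Hmd; destruct Hmd as [? [<- _]]; exact Hnd1. }
  { simpl length. lia. }
  assert (HfA : forall f a, In f [f1; f2] -> In a A -> ~ (q | f - a)).
  { intros f a Hf Ha. assert (Hin : In (1, -a) L1) by (unfold L1; apply in_or_app; left; apply in_map_iff; eauto).
    destruct Hf as [<-|[<-|[]]].
    - specialize (Hf1 _ Hin). cbn [fst snd] in Hf1. replace (f1 - a) with (1 * f1 + - a) by ring. auto.
    - specialize (Hf2 _ (or_intror Hin)). cbn [fst snd] in Hf2. replace (f2 - a) with (1 * f2 + - a) by ring. auto. }
  assert (HfB : forall f b, In f [f1; f2] -> In b B -> ~ (q | f + b)).
  { intros f b Hf Hb. assert (Hin : In (1, b) L1) by (unfold L1; apply in_or_app; right; apply in_map_iff; eauto).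
    destruct Hf as [<-|[<-|[]]].
    - specialize (Hf1 _ Hin). cbn [fst snd] in Hf1. replace (f1 + b) with (1 * f1 + b) by ring. auto.
    - specialize (Hf2 _ (or_intror Hin)). cbn [fst snd] in Hf2. replace (f2 + b) with (1 * f2 + b) by ring. auto. }
  assert (H12 : ~ (q | f2 - f1)).
  { specialize (Hf2 _ (or_introl eq_refl)). cbn [fst snd] in Hf2. replace (f2 - f1) with (1 * f2 + - f1) by ring. auto. }
  set (W := A ++ [f1; f2]).
  assert (HWlen : Z.of_nat (length W) = Z.of_nat (length A) + 2).
  { unfold W. rewrite length_app. simpl length. lia. }
  set (Lr := match tr with Some r => map (fun a => (-1, a + r)) A ++ [(-1, f1 + r); (-1, f2 + r)] | None => [] end).
  set (Lc := map (fun b => (1,b)) B ++ Lr ++ [(1, -f1); (1, -f2)] ++ map (fun w => (2, -(x0 + w))) W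
             ++ map (fun pr => (1, -(x0 + fst pr - snd pr))) (list_prod W W)).
  destruct (pigeon q Lc Hq) as [c Hc].
  { intros md Hmd. unfold Lc in Hmd.
    repeat (apply in_app_or in Hmd; destruct Hmd as [Hmd|Hmd]);
    try (apply in_map_iff in Hmd; destruct Hmd as [? [<- _]]; cbn [fst]; auto; fail).
    - unfold Lr in Hmd. destruct tr as [r|]; [|destruct Hmd].
      apply in_app_or in Hmd. destruct Hmd as [Hmd|Hmd].
      + apply in_map_iff in Hmd; destruct Hmd as [? [<- _]]; auto.
      + destruct Hmd as [<-|[<-|[]]]; auto.
    - destruct Hmd as [<-|[<-|[]]]; auto. }
  { unfold Lc. rewrite !length_app, !length_map, length_prod. simpl length.
    assert (Hlr : (length Lr <= length A + 2)%nat).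
    { unfold Lr. destruct tr; [rewrite length_app, length_map; simpl; lia| simpl; lia]. }
    assert (Z.of_nat (length W * length W) = Z.of_nat (length W) * Z.of_nat (length W)) by lia.
    lia. }
  exists c. intros x Hx.
  assert (HLc : forall m d, In (m, d) Lc -> ~ (q | m * x + d)).
  { intros m d Hin. apply (ndiv_cong q m x c d Hx). exact (Hc _ Hin). }
  assert (Hc_b : forall b, In b B -> ~ (q | x + b)).
  { intros b Hb. replace (x + b) with (1 * x + b) by ring. apply HLc. unfold Lc.
    apply in_or_app. left. apply in_map_iff. eauto. }
  assert (Hc_ar : forall r a, tr = Some r -> In a A -> ~ (q | a + r - x)).
  { intros r a Er Ha. replace (a + r - x) with (-1 * x + (a + r)) by ring. apply HLc. unfold Lc.
    apply in_or_app. right. apply in_or_app. left. unfold Lr. rewrite Er.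
    apply in_or_app. left. apply in_map_iff. eauto. }
  assert (Hc_fr : forall r f, tr = Some r -> In f [f1; f2] -> ~ (q | f + (r - x))).
  { intros r f Er Hf. replace (f + (r - x)) with (-1 * x + (f + r)) by ring. apply HLc. unfold Lc.
    apply in_or_app. right. apply in_or_app. left. unfold Lr. rewrite Er.
    apply in_or_app. right. destruct Hf as [<-|[<-|[]]]; simpl; auto. }
  assert (Hc_f : forall f, In f [f1; f2] -> ~ (q | x - f)).
  { intros f Hf. replace (x - f) with (1 * x + - f) by ring. apply HLc. unfold Lc.
    do 2 (apply in_or_app; right). apply in_or_app; left. destruct Hf as [<-|[<-|[]]]; simpl; auto. }
  assert (Hc_2 : forall w, In w W -> ~ (q | 2 * x - x0 - w)).
  { intros w Hw. replace (2 * x - x0 - w) with (2 * x + - (x0 + w)) by ring. apply HLc. unfold Lc.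
    do 3 (apply in_or_app; right). apply in_or_app; left. apply in_map_iff. eauto. }
  assert (Hc_d : forall w1 w2, In w1 W -> In w2 W -> ~ (q | x - (x0 + w1 - w2))).
  { intros w1 w2 Hw1 Hw2. replace (x - (x0 + w1 - w2)) with (1 * x + - (x0 + w1 - w2)) by ring.
    apply HLc. unfold Lc.
    do 4 (apply in_or_app; right). apply in_map_iff. exists (w1, w2). split; [reflexivity|].
    apply in_prod; auto. }
  split.
  - intros sd Hsd. apply in_formsA in Hsd.
    destruct Hsd as [[b [Hb ->]] | [r [a [Er [Ha ->]]]]]; cbn [fst snd].
    + replace (1 * x + b) with (x + b) by ring. auto.
    + replace (-1 * x + (a + r)) with (a + r - x) by ring. eauto.
  - exists [f1; f2]. repeat split.
    + constructor; [|constructor; [intros []|constructor]].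
      intros [E|[]]. apply H12. rewrite E. rewrite Z.sub_diag. apply Z.divide_0_r.
    + intros f f' Hf Hf' Hd.
      destruct Hf as [<-|[<-|[]]]; destruct Hf' as [<-|[<-|[]]]; auto; exfalso; apply H12; auto.
      apply Z.divide_opp_r in Hd. replace (- (f1 - f2)) with (f2 - f1) in Hd by ring. auto.
    + intros f a Hf Ha. apply in_app1 in Ha. destruct Ha as [Ha| ->].
      * intro Hd. apply (HfA f a Hf Ha). apply Z.divide_opp_r in Hd.
        replace (- (a - f)) with (f - a) in Hd by ring. auto.
      * auto.
    + intros f b Hf Hb. apply in_app_or in Hb. destruct Hb as [Hb|Hb]; auto.
      apply in_nb in Hb. destruct Hb as [r [Er ->]]. eauto.
    + intros; simpl; lia.
    + intros; simpl; lia.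
    + intros rho Hrho.
      destruct (classic (exists w, In w W /\ (q | w + rho - x))) as [[w1 [Hw1 Hd1]] | Hno].
      * (* x fails, use x0 *)
        exists x0. repeat split.
        -- apply in_or_app; auto.
        -- intros b Hb. apply in_app_or in Hb. destruct Hb as [Hb|Hb]; auto.
           apply in_nb in Hb. destruct Hb as [r [Er ->]].
           replace (x0 + (r - x)) with (x0 + r - x) by ring. eauto.
        -- intros a' Ha' Hd2. apply in_app1 in Ha'. destruct Ha' as [Ha'| ->].
           ++ apply (Hc_d w1 a'); auto. unfold W; apply in_or_app; auto.
              replace (x - (x0 + w1 - a')) with ((a' + rho - x0) - (w1 + rho - x)) by ring.
              apply Z.divide_sub_r; auto.
           ++ apply (Hc_2 w1 Hw1).
              replace (2 * x - x0 - w1) with ((x + rho - x0) - (w1 + rho - x)) by ring.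
              apply Z.divide_sub_r; auto.
        -- intros f Hf Hd2. apply (Hc_d w1 f); auto. unfold W; apply in_or_app; auto.
           replace (x - (x0 + w1 - f)) with ((f + rho - x0) - (w1 + rho - x)) by ring.
           apply Z.divide_sub_r; auto.
      * exists x. repeat split.
        -- apply in_or_app; simpl; auto.
        -- intros b Hb. apply in_app_or in Hb. destruct Hb as [Hb|Hb]; auto.
           apply in_nb in Hb. destruct Hb as [r [Er ->]].
           replace (x + (r - x)) with r by ring. eauto.
        -- intros a' Ha' Hd. apply in_app1 in Ha'. destruct Ha' as [Ha'| ->].
           ++ apply Hno. exists a'. split; auto. unfold W; apply in_or_app; auto.
           ++ apply Hrho. replace rho with (x + rho - x) by ring. auto.
        -- intros f Hf Hd. apply Hno. exists f. split; auto. unfold W; apply in_or_app; auto.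
Qed.


Definition A0 : list Z := [0; 54; -288].
Definition B0 : list Z := [293; 283].
Definition Kn (n : nat) : nat := ((n + 7) * (n + 7))%nat.
Definition en (n : nat) : Z := let m := Z.of_nat n in if Z.even m then m / 2 else - (m / 2).

Record InvG (la lb : nat) (Kc : nat) (nt : nat) (A B : list Z) : Prop := {
  i_sums : forall a b, In a A -> In b B -> prime (Z.abs (a + b)) /\ 3 < Z.abs (a + b);
  i_inj : forall a b a' b', In a A -> In b B -> In a' A -> In b' B -> a + b = a' + b' -> a = a' /\ b = b';
  i_lenA : (length A <= la)%nat;
  i_lenB : (length B <= lb)%nat;
  i_loc : forall q, prime q -> q <= Z.of_nat Kc -> Loc q A B;
  i_tgt : forall m, (m < nt)%nat -> signed_prime_gt3 (en m) -> rep A B (en m);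
  i_A0 : incl A0 A }.

Definition Inv (n : nat) (A B : list Z) := InvG (n + 3) (2 * n + 2) (Kn n) n A B.

Definition sumabs (l : list Z) : Z := fold_right (fun a s => Z.abs a + s) 0 l.
Lemma sumabs_nn l : 0 <= sumabs l.
Proof. induction l; simpl; lia. Qed.
Lemma sumabs_in l a : In a l -> Z.abs a <= sumabs l.
Proof. induction l; simpl; [intros []|]. intros [->|H]; [pose proof (sumabs_nn l); lia|]. specialize (IHl H); lia. Qed.

Lemma en_abs n : Z.abs (en n) <= Z.of_nat n.
Proof.
  unfold en. destruct (Z.even (Z.of_nat n)).
  - pose proof (Z.div_pos (Z.of_nat n) 2). pose proof (Z.div_le_upper_bound (Z.of_nat n) 2 (Z.of_nat n)). lia.
  - pose proof (Z.div_pos (Z.of_nat n) 2). pose proof (Z.div_le_upper_bound (Z.of_nat n) 2 (Z.of_nat n)). lia.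
Qed.

Lemma gt3 s : prime (Z.abs s) -> ~ (2 | s) -> ~ (3 | s) -> 3 < Z.abs s.
Proof.
  intros Hp H2 H3. pose proof (prime_gt1 _ Hp).
  destruct (Z.eq_dec (Z.abs s) 2) as [E|E].
  { exfalso. apply H2. apply Z.divide_abs_r. rewrite E. apply Z.divide_refl. }
  destruct (Z.eq_dec (Z.abs s) 3) as [E'|E'].
  { exfalso. apply H3. apply Z.divide_abs_r. rewrite E'. apply Z.divide_refl. }
  lia.
Qed.

Lemma prime2 : prime 2. Proof. apply prime_2. Qed.
Lemma prime3 : prime 3. Proof. apply prime_3. Qed.

Lemma exists_x0 q A B : prime q ->
  (forall a b, In a A -> In b B -> prime (Z.abs (a + b))) ->
  (forall a b a' b', In a A -> In b B -> In a' A -> In b' B -> a + b = a' + b' -> a = a' /\ b = b') ->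
  incl A0 A -> exists x0, In x0 A /\ forall b, In b B -> ~ (q | x0 + b).
Proof.
  intros Hq Hs Hinj H0. apply NNPP. intro Hn.
  assert (Hall : forall a, In a A -> exists b, In b B /\ (a + b = q \/ a + b = -q)).
  { intros a Ha. apply NNPP. intro Hb. apply Hn. exists a. split; auto. intros b Hb' Hd.
    apply Hb. exists b. split; auto.
    apply Z.divide_abs_r in Hd. pose proof (prime_div_prime _ _ Hq (Hs a b Ha Hb') Hd). lia. }
  assert (I1 : In 0 A) by (apply H0; simpl; auto).
  assert (I2 : In 54 A) by (apply H0; simpl; auto).
  assert (I3 : In (-288) A) by (apply H0; simpl; auto).
  destruct (Hall _ I1) as [b1 [Hb1 E1]]. destruct (Hall _ I2) as [b2 [Hb2 E2]].
  destruct (Hall _ I3) as [b3 [Hb3 E3]].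
  assert (N12 : 0 + b1 <> 54 + b2) by (intro E; apply Hinj in E; auto; lia).
  assert (N13 : 0 + b1 <> -288 + b3) by (intro E; apply Hinj in E; auto; lia).
  assert (N23 : 54 + b2 <> -288 + b3) by (intro E; apply Hinj in E; auto; lia).
  lia.
Qed.

Lemma formsA_len A B tr : (length (formsA A B tr) <= length B + length A)%nat.
Proof. unfold formsA. rewrite length_app, length_map. destruct tr; [rewrite length_map|simpl]; lia. Qed.

Lemma formsA_coef A B tr sd : In sd (formsA A B tr) -> fst sd = 1 \/ fst sd = -1.
Proof. intro H. apply in_formsA in H. destruct H as [[b [_ ->]]|[r [a [_ [_ ->]]]]]; simpl; auto. Qed.

Lemma A_step_tr (PTH : prime_tuple_hypothesis) n A B tr : Inv n A B ->
  (forall r, tr = Some r -> r = en n /\ signed_prime_gt3 r /\ ~ rep A B r) ->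
  (tr = None -> ~ (signed_prime_gt3 (en n) /\ ~ rep A B (en n))) ->
  exists x, InvG (n + 4) (2 * n + 3) (Kn (S n)) (S n) (A ++ [x]) (B ++ nb tr x) /\ Z.of_nat n < Z.abs x.
Proof.
  intros HI Htr Hnone. destruct HI as [Hs Hinj HlA HlB Hloc Htg HA0].
  set (Sz := sumabs A + sumabs B + Z.abs (en n)).
  destruct (choose_x PTH (Kn (S n)) (formsA A B tr)
     (fun q x => (forall sd, In sd (formsA A B tr) -> ~ (q | fst sd * x + snd sd)) /\
                 Loc q (A ++ [x]) (B ++ nb tr x)) (4 * Sz + Z.of_nat n))
    as [x [Hbig [Hpr Hgood]]].
  - apply formsA_coef.
  - pose proof (formsA_len A B tr). unfold Kn. nia.
  - intros q Hq Hle.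
    destruct (Z.le_gt_cases q (Z.of_nat (Kn n))) as [Hle'|Hgt].
    + destruct (ctrlA q A B tr Hq (Hloc q Hq Hle')) as [c Hc].
      { intros r Er. destruct (Htr r Er) as [_ [H1 H2]]; auto. }
      exists c. intros x Hx. destruct (Hc x Hx) as [H1 H2]. auto.
    + destruct (exists_x0 q A B Hq) as [x0 [Hx0 Hx0B]]; auto.
      { intros a b Ha Hb. apply Hs; auto. }
      destruct (enterA q A B tr x0 Hq Hx0 Hx0B) as [c Hc].
      { intros r Er Hd. destruct (Htr r Er) as [-> [Hsp _]].
        destruct Hsp as [p [Hp [H3 Hr]]].
        pose proof (en_abs n).
        apply Z.divide_abs_r in Hd. apply Z.divide_pos_le in Hd; [|lia]. unfold Kn in Hgt. lia. }
      { unfold Kn in Hgt. nia. }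
      exists c. intros x Hx. destruct (Hc x Hx) as [H1 H2]. auto.
  - assert (HbA : forall a, In a A -> Z.abs a <= sumabs A) by (intros; apply sumabs_in; auto).
    assert (HbB : forall b, In b B -> Z.abs b <= sumabs B) by (intros; apply sumabs_in; auto).
    pose proof (sumabs_nn A). pose proof (sumabs_nn B).
    assert (Hr : forall r, tr = Some r -> Z.abs r <= Z.abs (en n)) by (intros r Er; destruct (Htr r Er) as [-> _]; lia).
    assert (H2 := proj1 (Hgood 2 prime2 ltac:(unfold Kn; lia))).
    assert (H3 := proj1 (Hgood 3 prime3 ltac:(unfold Kn; lia))).
    assert (Hform_b : forall b, In b B -> In (1, b) (formsA A B tr)).
    { intros b Hb. unfold formsA. apply in_or_app. left. apply in_map_iff. eauto. }
    assert (Hform_a : forall r a, tr = Some r -> In a A -> In (-1, a + r) (formsA A B tr)).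
    { intros r a Er Ha. unfold formsA. rewrite Er. apply in_or_app. right. apply in_map_iff. eauto. }
    exists x. split; [|lia]. split.
    + intros a b Ha Hb. apply in_app1 in Ha. apply in_app_or in Hb.
      destruct Hb as [Hb|Hb]; [destruct Ha as [Ha| ->]|apply in_nb in Hb; destruct Hb as [r [Er ->]]; destruct Ha as [Ha| ->]].
      * auto.
      * pose proof (Hpr _ (Hform_b b Hb)) as P. pose proof (H2 _ (Hform_b b Hb)) as D2.
        pose proof (H3 _ (Hform_b b Hb)) as D3. cbn [fst snd] in P, D2, D3.
        rewrite Z.mul_1_l in P, D2, D3. split; auto. apply gt3; auto.
      * pose proof (Hpr _ (Hform_a r a Er Ha)) as P. pose proof (H2 _ (Hform_a r a Er Ha)) as D2.
        pose proof (H3 _ (Hform_a r a Er Ha)) as D3. cbn [fst snd] in P, D2, D3.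
        replace (-1 * x + (a + r)) with (a + (r - x)) in P, D2, D3 by ring. split; auto. apply gt3; auto.
      * destruct (Htr r Er) as [_ [[p [Hp [Hp3 Hrp]]] _]].
        replace (x + (r - x)) with r by ring.
        destruct Hrp as [-> | ->]; [|rewrite Z.abs_opp]; rewrite Z.abs_eq by lia; auto.
    + intros a b a' b' Ha Hb Ha' Hb' E.
      apply in_app1 in Ha. apply in_app1 in Ha'. apply in_app_or in Hb. apply in_app_or in Hb'.
      destruct Hb as [Hb|Hb]; [|apply in_nb in Hb; destruct Hb as [r [Er ->]]];
      (destruct Hb' as [Hb'|Hb']; [|apply in_nb in Hb'; destruct Hb' as [r' [Er' ->]]]);
      destruct Ha as [Ha| ->]; destruct Ha' as [Ha'| ->];
      repeat match goal with
             | H : In ?v A |- _ => pose proof (HbA v H); revert H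
             | H : In ?v B |- _ => pose proof (HbB v H); revert H
             | H : tr = Some ?v |- _ => pose proof (Hr v H); revert H
             end; intros;
      try (apply Hinj; auto; fail);
      try (match goal with H1 : tr = Some ?u, H2 : tr = Some ?v |- _ =>
             rewrite H1 in H2; injection H2 as <- end);
      try (exfalso; match goal with H : tr = Some ?u |- _ => destruct (Htr u H) as [_ [_ Hn]]; apply Hn;
             match goal with Ha : In ?s A, Hb : In ?t B |- _ => exists s, t; split; [exact Ha|split; [exact Hb|lia]] end end; fail);
      lia.
    + rewrite length_app. simpl. lia.
    + rewrite length_app. destruct tr; simpl; lia.
    + intros q Hq Hle. apply Hgood; auto.
    + intros m Hm Hsp. destruct (Nat.eq_dec m n) as [->|Hne].
      * destruct tr as [r|] eqn:Etr.
        -- destruct (Htr r eq_refl) as [<- _]. exists x, (r - x). repeat split; try ring;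
           apply in_or_app; simpl; auto.
        -- specialize (Hnone eq_refl). destruct (classic (rep A B (en n))) as [Hrep|Hrep].
           ++ apply rep_mono; auto.
           ++ exfalso; auto.
      * apply rep_mono. apply Htg; auto; lia.
    + intros a Ha. apply in_or_app. left. auto.
Qed.

Lemma A_step (PTH : prime_tuple_hypothesis) n A B : Inv n A B ->
  exists A' B', InvG (n + 4) (2 * n + 3) (Kn (S n)) (S n) A' B' /\ incl A A' /\ incl B B' /\
     exists x, In x A' /\ Z.of_nat n < Z.abs x.
Proof.
  intros HI.
  destruct (classic (signed_prime_gt3 (en n) /\ ~ rep A B (en n))) as [Hreal|Hdum].
  - destruct (A_step_tr PTH n A B (Some (en n)) HI) as [x [H1 H2]].
    + intros r Er. injection Er as <-. auto.
    + intros E; discriminate.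
    + exists (A ++ [x]), (B ++ nb (Some (en n)) x). split; [exact H1|].
      split; [intros z Hz; apply in_or_app; auto|]. split; [intros z Hz; apply in_or_app; auto|].
      exists x. split; auto. apply in_or_app; simpl; auto.
  - destruct (A_step_tr PTH n A B None HI) as [x [H1 H2]].
    + intros r Er. discriminate.
    + intros _. auto.
    + exists (A ++ [x]), (B ++ nb None x). split; [exact H1|].
      split; [intros z Hz; apply in_or_app; auto|]. split; [intros z Hz; apply in_or_app; auto|].
      exists x. split; auto. apply in_or_app; simpl; auto.
Qed.


Lemma B_step (PTH : prime_tuple_hypothesis) n A B : InvG (n + 4) (2 * n + 3) (Kn (S n)) (S n) A B ->
  exists y, Inv (S n) A (B ++ [y]) /\ Z.of_nat n < Z.abs y.
Proof.
  intros HI. destruct HI as [Hs Hinj HlA HlB Hloc Htg HA0].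
  set (Sz := sumabs A + sumabs B).
  set (L := map (fun a => (1, a)) A).
  destruct (choose_x PTH (Kn (S n)) L
     (fun q y => (forall sd, In sd L -> ~ (q | fst sd * y + snd sd)) /\ Loc q A (B ++ [y]))
     (3 * Sz + Z.of_nat n)) as [y [Hbig [Hpr Hgood]]].
  - intros sd Hsd. unfold L in Hsd. apply in_map_iff in Hsd. destruct Hsd as [a [<- _]]. auto.
  - unfold L. rewrite length_map. unfold Kn. nia.
  - intros q Hq Hle. destruct (ctrlB q A B Hq (Hloc q Hq Hle)) as [c Hc].
    exists c. intros y Hy. destruct (Hc y Hy) as [G1 G2]. split; [exact G1|split; [exact G1|exact G2]].
  - assert (HbA : forall a, In a A -> Z.abs a <= sumabs A) by (intros; apply sumabs_in; auto).
    assert (HbB : forall b, In b B -> Z.abs b <= sumabs B) by (intros; apply sumabs_in; auto).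
    pose proof (sumabs_nn A). pose proof (sumabs_nn B).
    assert (H2 := proj1 (Hgood 2 prime2 ltac:(unfold Kn; lia))).
    assert (H3 := proj1 (Hgood 3 prime3 ltac:(unfold Kn; lia))).
    assert (HL : forall a, In a A -> In (1, a) L) by (intros a Ha; unfold L; apply in_map_iff; eauto).
    exists y. split; [|lia]. split.
    + intros a b Ha Hb. apply in_app1 in Hb. destruct Hb as [Hb| ->]; auto.
      pose proof (Hpr _ (HL a Ha)) as P. pose proof (H2 _ (HL a Ha)) as D2.
      pose proof (H3 _ (HL a Ha)) as D3. cbn [fst snd] in P, D2, D3.
      replace (1 * y + a) with (a + y) in P, D2, D3 by ring. split; auto. apply gt3; auto.
    + intros a b a' b' Ha Hb Ha' Hb' E.
      apply in_app1 in Hb. apply in_app1 in Hb'.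
      destruct Hb as [Hb| ->]; destruct Hb' as [Hb'| ->];
      pose proof (HbA a Ha); pose proof (HbA a' Ha');
      try (apply Hinj; auto; fail);
      repeat match goal with H : In ?v B |- _ => pose proof (HbB v H); clear H end; lia.
    + lia.
    + rewrite length_app. simpl. lia.
    + intros q Hq Hle. apply Hgood; auto.
    + intros m Hm Hsp. replace A with (A ++ []) by apply app_nil_r. apply rep_mono. apply Htg; auto.
    + auto.
Qed.

Lemma round (PTH : prime_tuple_hypothesis) n A B : Inv n A B ->
  exists A' B', Inv (S n) A' B' /\ incl A A' /\ incl B B' /\
    (exists x, In x A' /\ Z.of_nat n < Z.abs x) /\ (exists y, In y B' /\ Z.of_nat n < Z.abs y).
Proof.
  intros HI. destruct (A_step PTH n A B HI) as [A1 [B1 [H1 [HA1 [HB1 Hx]]]]].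
  destruct (B_step PTH n A1 B1 H1) as [y [H2 Hy]].
  exists A1, (B1 ++ [y]). split; [exact H2|]. split; [auto|]. split.
  - intros z Hz. apply in_or_app. left. auto.
  - split; auto. exists y. split; auto. apply in_or_app; simpl; auto.
Qed.


Definition isprimeb (p : Z) : bool :=
  (1 <? p) && forallb (fun d => negb (p mod d =? 0)) (map Z.of_nat (seq 2 (Z.to_nat p - 2))).

Lemma isprimeb_sound p : isprimeb p = true -> prime p.
Proof.
  unfold isprimeb. intro H. apply andb_true_iff in H. destruct H as [H1 H2].
  apply Z.ltb_lt in H1. apply prime_alt. split; auto.
  intros d Hd Hdiv. rewrite forallb_forall in H2.
  assert (Hin : In d (map Z.of_nat (seq 2 (Z.to_nat p - 2)))).
  { apply in_map_iff. exists (Z.to_nat d). split; [lia|]. apply in_seq. lia. }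
  specialize (H2 d Hin). apply negb_true_iff in H2. apply Z.eqb_neq in H2.
  apply H2. apply Z.mod_divide; auto; lia.
Qed.

Lemma isprimeb_complete p : prime p -> isprimeb p = true.
Proof.
  intro Hp. apply prime_alt in Hp. destruct Hp as [H1 H2]. unfold isprimeb.
  apply andb_true_iff. split; [apply Z.ltb_lt; auto|].
  apply forallb_forall. intros d Hd. apply in_map_iff in Hd. destruct Hd as [k [<- Hk]].
  apply in_seq in Hk. apply negb_true_iff. apply Z.eqb_neq. intro E.
  apply (H2 (Z.of_nat k)); [lia|]. apply Z.mod_divide; auto; lia.
Qed.

Definition dvdb (q u : Z) : bool := (u mod q =? 0).
Lemma dvdb_false q u : 0 < q -> dvdb q u = false -> ~ (q | u).
Proof. unfold dvdb. intros Hq H Hd. apply Z.eqb_neq in H. apply H. apply Z.mod_divide; auto; lia. Qed.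

Definition repb (A B : list Z) (s : Z) : bool := existsb (fun a => existsb (fun b => a + b =? s) B) A.
Lemma repb_sound A B s : repb A B s = true -> rep A B s.
Proof.
  unfold repb. intro H. apply existsb_exists in H. destruct H as [a [Ha H]].
  apply existsb_exists in H. destruct H as [b [Hb H]]. apply Z.eqb_eq in H. exists a, b. auto.
Qed.

Definition Mainb (q : Z) (A B F : list Z) : bool :=
  forallb (fun rho => existsb (fun a =>
     forallb (fun b => negb (dvdb q (a + b))) B &&
     forallb (fun a' => negb (dvdb q (a' + rho - a))) A &&
     forallb (fun f => negb (dvdb q (f + rho - a))) F) A) (map Z.of_nat (seq 1 (Z.to_nat q - 1))).

Definition Fokb (q : Z) (F : list Z) : bool :=
  match F with [] => true | [f] => true | [f1; f2] => negb (dvdb q (f1 - f2)) | _ => false end.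

Definition Locb (q : Z) (A B F : list Z) : bool :=
  Fokb q F &&
  forallb (fun f => forallb (fun a => negb (dvdb q (a - f))) A) F &&
  forallb (fun f => forallb (fun b => negb (dvdb q (f + b))) B) F &&
  ((q <=? 3) || ((repb A B q || repb A B (-q) || (2 <=? length F)%nat) &&
                 ((repb A B q && repb A B (-q)) || (1 <=? length F)%nat))) &&
  Mainb q A B F.

Lemma nd_shift q u v : (q | u - v) -> ~ (q | v) -> ~ (q | u).
Proof. intros H1 H2 H3. apply H2. replace v with (u - (u - v)) by ring. apply Z.divide_sub_r; auto. Qed.

Lemma Locb_sound q A B F : 0 < q -> Locb q A B F = true -> Loc q A B.
Proof.
  intros Hq H. unfold Locb in H. repeat rewrite andb_true_iff in H.
  destruct H as [[[[HF HA] HB] HC] HM].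
  rewrite forallb_forall in HA, HB.
  exists F. split; [|split; [|split; [|split; [|split; [|split]]]]].
  - destruct F as [|f1 [|f2 [|f3 F]]]; simpl in HF; try discriminate.
    + constructor.
    + constructor; [intros []|constructor].
    + constructor; [|constructor; [intros []|constructor]].
      intros [E|[]]. subst. apply negb_true_iff in HF. apply (dvdb_false _ _ Hq HF).
      rewrite Z.sub_diag. apply Z.divide_0_r.
  - destruct F as [|f1 [|f2 [|f3 F]]]; simpl in HF; try discriminate.
    + intros f f' [].
    + intros f f' [<-|[]] [<-|[]]; auto.
    + apply negb_true_iff in HF. pose proof (dvdb_false _ _ Hq HF) as HF'.
      intros f f' [<-|[<-|[]]] [<-|[<-|[]]] Hd; auto; exfalso; apply HF'; auto.
      apply Z.divide_opp_r in Hd. replace (- (f2 - f1)) with (f1 - f2) in Hd by ring. auto.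
  - intros f a Hf Ha. specialize (HA f Hf). rewrite forallb_forall in HA. specialize (HA a Ha).
    apply negb_true_iff in HA. apply dvdb_false; auto.
  - intros f b Hf Hb. specialize (HB f Hf). rewrite forallb_forall in HB. specialize (HB b Hb).
    apply negb_true_iff in HB. apply dvdb_false; auto.
  - intros H3 H1 H2. apply orb_true_iff in HC. destruct HC as [HC|HC]; [apply Z.leb_le in HC; lia|].
    apply andb_true_iff in HC. destruct HC as [HC _].
    repeat (apply orb_true_iff in HC; destruct HC as [HC|HC]).
    + exfalso. apply H1. apply repb_sound; auto.
    + exfalso. apply H2. apply repb_sound; auto.
    + apply Nat.leb_le; auto.
  - intros H3 H12. apply orb_true_iff in HC. destruct HC as [HC|HC]; [apply Z.leb_le in HC; lia|].
    apply andb_true_iff in HC. destruct HC as [_ HC].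
    apply orb_true_iff in HC. destruct HC as [HC|HC].
    + exfalso. apply andb_true_iff in HC. destruct HC as [R1 R2].
      destruct H12 as [H|H]; apply H; apply repb_sound; auto.
    + apply Nat.leb_le; auto.
  - intros rho Hrho. unfold Mainb in HM. rewrite forallb_forall in HM.
    set (r' := rho mod q).
    assert (Hr' : 0 <= r' < q) by (apply Z.mod_pos_bound; auto).
    assert (Hr0 : r' <> 0).
    { intro E. apply Hrho. apply Z.mod_divide; auto; lia. }
    assert (Hin : In r' (map Z.of_nat (seq 1 (Z.to_nat q - 1)))).
    { apply in_map_iff. exists (Z.to_nat r'). split; [lia|]. apply in_seq. lia. }
    specialize (HM r' Hin). apply existsb_exists in HM. destruct HM as [a [Ha Hc]].
    repeat rewrite andb_true_iff in Hc. destruct Hc as [[H1 H2] H3].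
    rewrite forallb_forall in H1, H2, H3.
    assert (Hrr : (q | rho - r')).
    { exists (rho / q). unfold r'. rewrite (Z.div_mod rho q) at 1 by lia. ring. }
    exists a. split; [auto|split; [|split]].
    + intros b Hb. specialize (H1 b Hb). apply negb_true_iff in H1. apply dvdb_false; auto.
    + intros a' Ha'. specialize (H2 a' Ha'). apply negb_true_iff in H2.
      apply (nd_shift _ _ (a' + r' - a)); [|apply dvdb_false; auto].
      replace (a' + rho - a - (a' + r' - a)) with (rho - r') by ring. auto.
    + intros f Hf. specialize (H3 f Hf). apply negb_true_iff in H3.
      apply (nd_shift _ _ (f + r' - a)); [|apply dvdb_false; auto].
      replace (f + rho - a - (f + r' - a)) with (rho - r') by ring. auto.
Qed.

Definition Ftab (q : Z) : list Z :=
  if q =? 7 then [2;3] else if q =? 11 then [2;5] else if q =? 13 then [1;5]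
  else if q =? 17 then [2;7] else if q =? 19 then [1;5] else if q =? 23 then [1;2]
  else if q =? 29 then [1;3] else if (q =? 2) || (q =? 3) || (q =? 5) then [] else [1;2].

Definition init_check : bool :=
  forallb (fun q => negb (isprimeb q) || Locb q A0 B0 (Ftab q)) (map Z.of_nat (seq 0 50)).

Lemma init_check_ok : init_check = true.
Proof. vm_compute. reflexivity. Qed.

Lemma init_loc q : prime q -> q <= 49 -> Loc q A0 B0.
Proof.
  intros Hq Hle. pose proof (prime_gt1 _ Hq).
  apply (Locb_sound q A0 B0 (Ftab q)); [lia|].
  pose proof init_check_ok as H0. unfold init_check in H0. rewrite forallb_forall in H0.
  assert (Hin : In q (map Z.of_nat (seq 0 50))).
  { apply in_map_iff. exists (Z.to_nat q). split; [lia|]. apply in_seq. lia. }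
  specialize (H0 q Hin). rewrite (isprimeb_complete q Hq) in H0. simpl in H0. exact H0.
Qed.

Lemma init_inv : Inv 0 A0 B0.
Proof.
  split.
  - intros a b Ha Hb. simpl in Ha, Hb.
    destruct Ha as [<-|[<-|[<-|[]]]]; destruct Hb as [<-|[<-|[]]]; simpl;
    (split; [apply isprimeb_sound; vm_compute; reflexivity | lia]).
  - intros a b a' b' Ha Hb Ha' Hb' E. simpl in Ha, Hb, Ha', Hb'.
    destruct Ha as [<-|[<-|[<-|[]]]]; destruct Hb as [<-|[<-|[]]];
    destruct Ha' as [<-|[<-|[<-|[]]]]; destruct Hb' as [<-|[<-|[]]]; lia.
  - simpl. lia.
  - simpl. lia.
  - intros q Hq Hle. apply init_loc; [exact Hq|]. unfold Kn in Hle. simpl in Hle. lia.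
  - intros m Hm. lia.
  - intros z Hz; auto.
Qed.


Lemma en_surj z : exists m, en m = z.
Proof.
  destruct (Z.le_gt_cases 0 z).
  - exists (Z.to_nat (2 * z)). unfold en. rewrite Z2Nat.id by lia. rewrite Z.even_even.
    rewrite Z.mul_comm, Z.div_mul by lia. reflexivity.
  - exists (Z.to_nat (2 * (- z) + 1)). unfold en. rewrite Z2Nat.id by lia.
    assert (Hd : (2 * - z + 1) / 2 = - z).
    { replace (2 * - z + 1) with (- z * 2 + 1) by ring. rewrite Z.div_add_l by lia. change (1/2) with 0. lia. }
    assert (He : Z.even (2 * - z + 1) = false) by (rewrite Z.even_add, Z.even_even; reflexivity).
    rewrite He, Hd. lia.
Qed.

Theorem theorem1 :
  prime_tuple_hypothesis ->
  exists A B : Z -> Prop,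
    infinite_Zset A /\ infinite_Zset B /\
    (forall r, (exists a b, A a /\ B b /\ r = a + b) <-> signed_prime_gt3 r) /\
    (forall r, signed_prime_gt3 r ->
       forall a b a' b', A a -> B b -> A a' -> B b' ->
         r = a + b -> r = a' + b' -> a = a' /\ b = b').
Proof.
  intros PTH.
  assert (Hr : forall n (s : list Z * list Z), exists s' : list Z * list Z,
     Inv n (fst s) (snd s) -> Inv (S n) (fst s') (snd s') /\ incl (fst s) (fst s') /\ incl (snd s) (snd s') /\
       (exists x, In x (fst s') /\ Z.of_nat n < Z.abs x) /\ (exists y, In y (snd s') /\ Z.of_nat n < Z.abs y)).
  { intros n [A B]. destruct (classic (Inv n A B)) as [HI|HI].
    - destruct (round PTH n A B HI) as [A' [B' H]]. exists (A', B'). intros _. exact H.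
    - exists (A, B). intro H; contradiction. }
  pose (f := fun n s => proj1_sig (constructive_indefinite_description _ (Hr n s))).
  assert (Hf : forall n s, Inv n (fst s) (snd s) -> Inv (S n) (fst (f n s)) (snd (f n s)) /\
       incl (fst s) (fst (f n s)) /\ incl (snd s) (snd (f n s)) /\
       (exists x, In x (fst (f n s)) /\ Z.of_nat n < Z.abs x) /\
       (exists y, In y (snd (f n s)) /\ Z.of_nat n < Z.abs y)).
  { intros n s. exact (proj2_sig (constructive_indefinite_description _ (Hr n s))). }
  pose (st := fix st n := match n with O => (A0, B0) | S k => f k (st k) end).
  assert (Hinv : forall n, Inv n (fst (st n)) (snd (st n))).
  { induction n; [exact init_inv|]. exact (proj1 (Hf n (st n) IHn)). }
  assert (Hstep : forall n, incl (fst (st n)) (fst (st (S n))) /\ incl (snd (st n)) (snd (st (S n)))).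
  { intro n. destruct (Hf n (st n) (Hinv n)) as [_ [H1 [H2 _]]]. auto. }
  assert (Hmono : forall n m, (n <= m)%nat -> incl (fst (st n)) (fst (st m)) /\ incl (snd (st n)) (snd (st m))).
  { intros n m Hnm. induction Hnm.
    - split; intros z Hz; auto.
    - destruct IHHnm as [H1 H2]. destruct (Hstep m) as [H3 H4].
      split; intros z Hz; auto. }
  exists (fun a => exists n, In a (fst (st n))), (fun b => exists n, In b (snd (st n))).
  assert (Hcommon : forall a b, (exists n, In a (fst (st n))) -> (exists n, In b (snd (st n))) ->
            forall k, exists m, (k <= m)%nat /\ In a (fst (st m)) /\ In b (snd (st m))).
  { intros a b [n1 H1] [n2 H2] k. exists (k + n1 + n2)%nat. split; [lia|]. split.
    - apply (proj1 (Hmono n1 (k + n1 + n2)%nat ltac:(lia))); auto.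
    - apply (proj2 (Hmono n2 (k + n1 + n2)%nat ltac:(lia))); auto. }
  split; [|split; [|split]].
  - intros [l Hl]. set (N := Z.to_nat (sumabs l)).
    destruct (Hf N (st N) (Hinv N)) as [_ [_ [_ [[x [Hx Hxb]] _]]]].
    assert (Hin : In x l) by (apply Hl; exists (S N); exact Hx).
    pose proof (sumabs_in l x Hin). pose proof (sumabs_nn l). unfold N in Hxb. lia.
  - intros [l Hl]. set (N := Z.to_nat (sumabs l)).
    destruct (Hf N (st N) (Hinv N)) as [_ [_ [_ [_ [y [Hy Hyb]]]]]].
    assert (Hin : In y l) by (apply Hl; exists (S N); exact Hy).
    pose proof (sumabs_in l y Hin). pose proof (sumabs_nn l). unfold N in Hyb. lia.
  - intro r. split.
    + intros [a [b [Ha [Hb ->]]]]. destruct (Hcommon a b Ha Hb O) as [m [_ [Ha' Hb']]].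
      destruct (i_sums _ _ _ _ _ _ (Hinv m) a b Ha' Hb') as [Hp H3].
      exists (Z.abs (a + b)). split; [auto|split; [auto|lia]].
    + intros Hsp. destruct (en_surj r) as [m <-].
      destruct (i_tgt _ _ _ _ _ _ (Hinv (S m)) m (Nat.lt_succ_diag_r m) Hsp) as [a [b [Ha [Hb E]]]].
      exists a, b. split; [exists (S m); auto|split; [exists (S m); auto|auto]].
  - intros r _ a b a' b' Ha Hb Ha' Hb' E1 E2.
    destruct (Hcommon a b Ha Hb O) as [m1 [_ [Ha1 Hb1]]].
    destruct (Hcommon a' b' Ha' Hb' m1) as [m [Hm [Ha2 Hb2]]].
    destruct (Hmono m1 m Hm) as [I1 I2].
    apply (i_inj _ _ _ _ _ _ (Hinv m) a b a' b'); auto. lia.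
Qed.
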